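(* Let $Q$ be a commutative Noetherian local ring, $x\in Q$ a $Q$-regular element and $R=Q/(x)$. Let $X$ be an $R$-complex with $H_i(X)=0$ for $|i|\gg0$. Then there exist a $Q$-projective resolution $W$ of $X$ (viewing $X$ as a $Q$-complex) and an $R$-projective resolution $F$ of $X$ together with an exact sequence of $R$-complexes $$0\to R\otimes_Q W\to F\to \Sigma^2 F\to 0$$ which is degreewise split.
   Context: For an integer $n$, $\Sigma^n X$ denotes the shifted complex with $(\Sigma^nX)_\ell=X_{\ell-n}$ and differential $(-1)^n\partial^X_{\ell-n}$. A projective resolution of a complex $X$ is a complex of projective modules (bounded below) together with a quasi-isomorphism to $X$. A sequence of complexes is degreewise split if it is split exact in each degree as a sequence of modules. *)

(* Defs.v *)
From HB Require Import structures.
From mathcomp Require Import all_boot all_order all_algebra.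
Set Implicit Arguments. Unset Strict Implicit. Unset Printing Implicit Defensive.
Import Order.TTheory GRing.Theory Num.Theory.
Local Open Scope ring_scope.

Definition ideal (Q : comNzRingType) (I : Q -> Prop) : Prop :=
  [/\ I 0, (forall a b, I a -> I b -> I (a + b)) & (forall r a, I a -> I (r * a))].

Definition finitely_generated (Q : comNzRingType) (I : Q -> Prop) : Prop :=
  exists s : seq Q, forall a, I a <->
    exists c : 'I_(size s) -> Q, a = \sum_(k < size s) c k * s`_k.

Definition noetherian (Q : comNzRingType) : Prop :=
  forall I : Q -> Prop, ideal I -> finitely_generated I.

Definition maximal_ideal (Q : comNzRingType) (m : Q -> Prop) : Prop :=
  [/\ ideal m, ~ m 1 &
      forall J : Q -> Prop, ideal J -> (forall a, m a -> J a) ->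
        J 1 \/ (forall a, J a -> m a)].

Definition local_ring (Q : comNzRingType) : Prop :=
  exists m : Q -> Prop, maximal_ideal m /\
    forall m', maximal_ideal m' -> forall a, m' a <-> m a.

(* x is Q-regular: a non-zero-divisor on Q with Q/xQ <> 0. *)
Definition regular_element (Q : comNzRingType) (x : Q) : Prop :=
  (forall q : Q, x * q = 0 -> q = 0) /\ ~ (exists q : Q, x * q = 1).

Definition is_quotient_by (Q R : comNzRingType) (x : Q) (pi : {rmorphism Q -> R}) : Prop :=
  (forall r : R, exists q : Q, pi q = r) /\
  (forall q : Q, pi q = 0 <-> exists a : Q, q = x * a).

Definition lin (A : comNzRingType) (U V : lmodType A) (f : U -> V) : Prop :=
  forall a u v, f (a *: u + v) = a *: f u + f v.

(* pi-semilinear maps: Q-linear maps from a Q-module to an R-module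
   viewed as a Q-module by restriction of scalars along pi. *)
Definition slin (Q R : comNzRingType) (pi : {rmorphism Q -> R})
  (U : lmodType Q) (V : lmodType R) (f : U -> V) : Prop :=
  forall a u v, f (a *: u + v) = pi a *: f u + f v.

Definition projective (A : comNzRingType) (P : lmodType A) : Prop :=
  forall (M N : lmodType A) (g : M -> N) (f : P -> N),
    lin g -> lin f -> (forall n, exists m, g m = n) ->
    exists h : P -> M, lin h /\ forall p, g (h p) = f p.

(* T together with eta : M -> T is the base change R (x)_Q M, characterised
   by its universal property (extension of scalars along pi). *)
Definition base_change (Q R : comNzRingType) (pi : {rmorphism Q -> R})
  (M : lmodType Q) (T : lmodType R) (eta : M -> T) : Prop :=
  slin pi eta /\
  forall (N : lmodType R) (f : M -> N), slin pi f ->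
    exists g : T -> N, [/\ lin g, (forall m, g (eta m) = f m) &
      forall g' : T -> N, lin g' -> (forall m, g' (eta m) = f m) ->
        forall t, g' t = g t].

(* A complex indexed by int (homological grading); the differential is given
   as a family cdif i j : C_i -> C_j which is zero unless j = i - 1
   (so cdif i (i-1) is the differential d_i). *)
Unset Implicit Arguments.
Record complex (A : comNzRingType) := Complex {
  cobj :> int -> lmodType A;
  cdif : forall i j : int, cobj i -> cobj j;
  cdif_lin : forall i j, lin (cdif i j);
  cdif_deg : forall i j x, j != i - 1 -> cdif i j x = 0;
  cdif_sq : forall i j k x, cdif j k (cdif i j x) = 0 }.
Set Implicit Arguments.
Arguments cdif {A} c i j.
Arguments Complex {A}.
Arguments cdif_lin {A} c i j.
Arguments cdif_deg {A} c i j x.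
Arguments cdif_sq {A} c i j k x.
Arguments cobj {A} c i.

Lemma shift_lin (A : comNzRingType) (C : complex A) (n : int) (i j : int) :
  lin (fun x : C (i - n) => (-1) ^+ `|n|%N *: cdif C (i - n) (j - n) x).
Proof.
move=> a u v /=; rewrite (cdif_lin C (i - n) (j - n) a u v) scalerDr !scalerA.
by rewrite mulrC.
Qed.

Lemma shift_deg (A : comNzRingType) (C : complex A) (n : int) (i j : int)
  (x : C (i - n)) : j != i - 1 ->
  (-1) ^+ `|n|%N *: cdif C (i - n) (j - n) x = 0.
Proof.
move=> h; rewrite (cdif_deg C) ?scaler0 //; apply: contra h => /eqP e.
apply/eqP; apply: (addIr (- n)); rewrite e.
by rewrite -!addrA [(- 1) + _]addrC.
Qed.

Lemma shift_sq (A : comNzRingType) (C : complex A) (n : int) (i j k : int)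
  (x : C (i - n)) :
  (-1) ^+ `|n|%N *: cdif C (j - n) (k - n)
     ((-1) ^+ `|n|%N *: cdif C (i - n) (j - n) x) = 0.
Proof.
have h0 : cdif C (j - n) (k - n) 0 = 0.
  have e := cdif_lin C (j - n) (k - n) 1 0 0.
  rewrite scale1r scale1r addr0 in e.
  by apply: (addIr (cdif C (j - n) (k - n) 0)); rewrite add0r -e.
have h := cdif_lin C (j - n) (k - n) ((-1) ^+ `|n|%N) (cdif C (i - n) (j - n) x) 0.
by rewrite addr0 h0 addr0 in h; rewrite h (cdif_sq C) !scaler0.
Qed.

Definition shift (A : comNzRingType) (n : int) (C : complex A) : complex A :=
  @Complex A (fun i => C (i - n))
    (fun i j x => (-1) ^+ `|n|%N *: cdif C (i - n) (j - n) x)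
    (@shift_lin A C n) (@shift_deg A C n) (@shift_sq A C n).

Definition chain_map (A : comNzRingType) (C D : complex A)
  (f : forall i, C i -> D i) : Prop :=
  (forall i, lin (f i)) /\
  (forall i j x, f j (cdif C i j x) = cdif D i j (f i x)).

Definition schain_map (Q R : comNzRingType) (pi : {rmorphism Q -> R})
  (C : complex Q) (D : complex R) (f : forall i, C i -> D i) : Prop :=
  (forall i, slin pi (f i)) /\
  (forall i j x, f j (cdif C i j x) = cdif D i j (f i x)).

(* f induces an isomorphism on all homology groups H_j. *)
Definition quasi_iso (A B : comNzRingType) (C : complex A) (D : complex B)
  (f : forall i, C i -> D i) : Prop :=
  forall j : int,
    (forall y : D j, cdif D j (j - 1) y = 0 ->
       exists (x : C j) (z : D (j + 1)),
         cdif C j (j - 1) x = 0 /\ y = f j x + cdif D (j + 1) j z) /\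
    (forall x : C j, cdif C j (j - 1) x = 0 ->
       (exists z : D (j + 1), f j x = cdif D (j + 1) j z) ->
       exists w : C (j + 1), x = cdif C (j + 1) j w).

Definition homology_zero (A : comNzRingType) (C : complex A) (i : int) : Prop :=
  forall y : C i, cdif C i (i - 1) y = 0 ->
    exists z : C (i + 1), y = cdif C (i + 1) i z.

Definition bounded_below (A : comNzRingType) (C : complex A) : Prop :=
  exists n0 : int, forall i, i < n0 -> forall p : C i, p = 0.

Definition proj_complex (A : comNzRingType) (C : complex A) : Prop :=
  bounded_below C /\ forall i, projective (C i).

Definition degreewise_split_exact (A : comNzRingType) (C D E : complex A)
  (alpha : forall i, C i -> D i) (beta : forall i, D i -> E i) : Prop :=
  forall i, [/\ injective (alpha i),
    (forall y, beta i y = 0 <-> exists x, y = alpha i x) &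
    exists s : E i -> D i, lin s /\ forall z, beta i (s z) = z].

(* Main.v *)
Require Import Defs.
From HB Require Import structures.
From mathcomp Require Import all_boot all_order all_algebra.
From Stdlib Require Import ClassicalEpsilon FunctionalExtensionality ProofIrrelevance.
Set Implicit Arguments. Unset Strict Implicit. Unset Printing Implicit Defensive.
Import Order.TTheory GRing.Theory Num.Theory.
Local Open Scope ring_scope.

Definition cdec (P : Prop) : bool :=
  if excluded_middle_informative P then true else false.
Lemma cdecP (P : Prop) : reflect P (cdec P).
Proof. by rewrite /cdec; case: excluded_middle_informative => h; constructor. Qed.

Section ClassicalChoice.
Variable T : Type.
Definition cfind (P : pred T) (n : nat) : option T :=
  match excluded_middle_informative (exists x, P x) with
  | left h => Some (proj1_sig (constructive_indefinite_description _ h))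
  | right _ => None end.
Lemma cfind_correct P n x : cfind P n = Some x -> P x.
Proof.
rewrite /cfind; case: excluded_middle_informative => // h [<-].
exact: (proj2_sig (constructive_indefinite_description _ h)).
Qed.
Lemma cfind_complete (P : pred T) : (exists x, P x) -> exists n, cfind P n.
Proof. by move=> h; exists 0%N; rewrite /cfind; case: excluded_middle_informative. Qed.
Lemma cfind_ext (P Q : pred T) : P =1 Q -> cfind P =1 cfind Q.
Proof. by move=> h; have -> : P = Q by apply: functional_extensionality. Qed.
Lemma ceq_axiom : Equality.axiom (fun x y : T => cdec (x = y)).
Proof. by move=> x y; apply: cdecP. Qed.
End ClassicalChoice.

Definition cT (S : Type) : Type := S.
HB.instance Definition _ (S : Type) := hasDecEq.Build (cT S) (@ceq_axiom S).
HB.instance Definition _ (S : Type) := hasChoice.Build (cT S)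
  (@cfind_correct S) (@cfind_complete S) (@cfind_ext S).

Section Free.
Variables (A : comNzRingType) (S : Type).

Record Fr := MkFr { fval : S -> A;
  fsupp : exists l : seq (cT S), forall s, fval s != 0 -> (s : cT S) \in l }.

HB.instance Definition _ := hasDecEq.Build Fr (@ceq_axiom Fr).
HB.instance Definition _ := hasChoice.Build Fr
  (@cfind_correct Fr) (@cfind_complete Fr) (@cfind_ext Fr).

Lemma frext (u v : Fr) : (forall s, fval u s = fval v s) -> u = v.
Proof.
case: u v => f pf [g pg] /= h.
have e : f = g by apply: functional_extensionality.
subst g; congr MkFr; apply: proof_irrelevance.
Qed.

Lemma fr0_supp : exists l : seq (cT S), forall s, (fun _ : S => (0 : A)) s != 0 -> (s : cT S) \in l.
Proof. by exists [::] => s; rewrite eqxx. Qed.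
Definition fr0 := MkFr fr0_supp.

Lemma fradd_supp (u v : Fr) : exists l : seq (cT S),
  forall s, (fun s => fval u s + fval v s) s != 0 -> (s : cT S) \in l.
Proof.
case: (fsupp u) => l1 h1; case: (fsupp v) => l2 h2; exists (l1 ++ l2) => s /=.
rewrite mem_cat; case: (eqVneq (fval u s) 0) => [e|/h1 -> //].
by rewrite e add0r => /h2 ->; rewrite orbT.
Qed.
Definition fradd u v := MkFr (fradd_supp u v).

Lemma fropp_supp (u : Fr) : exists l : seq (cT S),
  forall s, (fun s => - fval u s) s != 0 -> (s : cT S) \in l.
Proof. by case: (fsupp u) => l h; exists l => s /=; rewrite oppr_eq0 => /h. Qed.
Definition fropp u := MkFr (fropp_supp u).

Lemma frscale_supp (a : A) (u : Fr) : exists l : seq (cT S),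
  forall s, (fun s => a * fval u s) s != 0 -> (s : cT S) \in l.
Proof.
case: (fsupp u) => l h; exists l => s /=.
by case: (eqVneq (fval u s) 0) => [->|/h -> //]; rewrite mulr0 eqxx.
Qed.
Definition frscale a u := MkFr (frscale_supp a u).

Lemma fraddA : associative fradd.
Proof. by move=> u v w; apply: frext => s /=; rewrite addrA. Qed.
Lemma fraddC : commutative fradd.
Proof. by move=> u v; apply: frext => s /=; rewrite addrC. Qed.
Lemma fradd0 : left_id fr0 fradd.
Proof. by move=> u; apply: frext => s /=; rewrite add0r. Qed.
Lemma fraddN : left_inverse fr0 fropp fradd.
Proof. by move=> u; apply: frext => s /=; rewrite addNr. Qed.

HB.instance Definition _ := GRing.isZmodule.Build Fr fraddA fraddC fradd0 fraddN.

Lemma frscaleA a b v : frscale a (frscale b v) = frscale (a * b) v.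
Proof. by apply: frext => s /=; rewrite mulrA. Qed.
Lemma frscale1 : left_id 1 frscale.
Proof. by move=> v; apply: frext => s /=; rewrite mul1r. Qed.
Lemma frscaleDr : right_distributive frscale +%R.
Proof. by move=> a u v; apply: frext => s /=; rewrite mulrDr. Qed.
Lemma frscaleDl v : {morph frscale^~ v: a b / a + b}.
Proof. by move=> a b; apply: frext => s /=; rewrite mulrDl. Qed.

HB.instance Definition _ := GRing.Zmodule_isLmodule.Build A Fr
  frscaleA frscale1 frscaleDr frscaleDl.

Lemma fvalD (u v : Fr) s : fval (u + v) s = fval u s + fval v s. Proof. by []. Qed.
Lemma fval0 s : fval (0 : Fr) s = 0. Proof. by []. Qed.
Lemma fvalN (u : Fr) s : fval (- u) s = - fval u s. Proof. by []. Qed.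
Lemma fvalZ a (u : Fr) s : fval (a *: u) s = a * fval u s. Proof. by []. Qed.

End Free.

From HB Require Import structures.
From mathcomp Require Import all_boot all_order all_algebra.
From Stdlib Require Import ClassicalEpsilon FunctionalExtensionality ProofIrrelevance.
Set Implicit Arguments. Unset Strict Implicit. Unset Printing Implicit Defensive.
Import Order.TTheory GRing.Theory Num.Theory.
Local Open Scope ring_scope.

Definition sl (A B : comNzRingType) (phi : A -> B) (U : lmodType A) (V : lmodType B)
  (f : U -> V) := forall a u v, f (a *: u + v) = phi a *: f u + f v.

Section SL.
Variables (A B : comNzRingType) (phi : {rmorphism A -> B}) (U : lmodType A) (V : lmodType B).
Variable f : U -> V.
Hypothesis hf : sl phi f.
Lemma slD u v : f (u + v) = f u + f v.
Proof. have := hf 1 u v. rewrite scale1r. rewrite rmorph1. rewrite scale1r. by []. Qed.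
Lemma sl0 : f 0 = 0.
Proof. by apply: (addIr (f 0)); rewrite -slD addr0 add0r. Qed.
Lemma slZ a u : f (a *: u) = phi a *: f u.
Proof. by have := hf a u 0; rewrite !addr0 sl0 addr0. Qed.
Lemma slN u : f (- u) = - f u.
Proof. by rewrite -scaleN1r slZ rmorphN1 scaleN1r. Qed.
Lemma slB u v : f (u - v) = f u - f v.
Proof. by rewrite slD slN. Qed.
Lemma sl_sum (I : Type) (l : seq I) (F : I -> U) :
  f (\sum_(i <- l) F i) = \sum_(i <- l) f (F i).
Proof.
elim: l => [|a l IH]; first by rewrite !big_nil sl0.
by rewrite !big_cons slD IH.
Qed.
End SL.

Lemma sl_comp (A B C : comNzRingType) (phi : {rmorphism A -> B}) (psi : {rmorphism B -> C})
  (U : lmodType A) (V : lmodType B) (W : lmodType C) (f : U -> V) (g : V -> W) :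
  sl phi f -> sl psi g -> sl (psi \o phi) (g \o f).
Proof. by move=> hf hg a u v /=; rewrite hf hg. Qed.

Section FreeTheory.
Variables (A : comNzRingType) (S : Type).
Local Notation F := (Fr A S).

Lemma fval_sum (I : Type) (l : seq I) (G : I -> F) t :
  fval (\sum_(i <- l) G i) t = \sum_(i <- l) fval (G i) t.
Proof.
elim: l => [|a l IH]; first by rewrite !big_nil.
by rewrite !big_cons fvalD IH.
Qed.

Definition supp (u : F) : seq (cT S) := undup (proj1_sig (constructive_indefinite_description _ (fsupp u))).
Lemma supp_uniq u : uniq (supp u). Proof. exact: undup_uniq. Qed.
Lemma supp_cover u s : fval u s != 0 -> (s : cT S) \in supp u.
Proof.
rewrite /supp mem_undup; move: (proj2_sig (constructive_indefinite_description _ (fsupp u))).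
by move=> h /h.
Qed.

Lemma e_supp (s : S) : exists l : seq (cT S),
  forall t, (fun t : S => if (t : cT S) == s then (1 : A) else 0) t != 0 -> (t : cT S) \in l.
Proof. by exists [:: (s : cT S)] => t /=; case: ifP => [/eqP ->|]; rewrite ?mem_seq1 ?eqxx. Qed.
Definition e (s : S) : F := MkFr (e_supp s).
Lemma fval_e s t : fval (e s) t = if (t : cT S) == s then 1 else 0. Proof. by []. Qed.

Lemma sum_cover_gen (V : zmodType) (G : cT S -> V) (l1 l2 : seq (cT S)) :
  uniq l1 -> uniq l2 -> (forall s, G s != 0 -> (s \in l1) && (s \in l2)) ->
  \sum_(s <- l1) G s = \sum_(s <- l2) G s.
Proof.
move=> u1 u2 h.
have E (la lb : seq (cT S)) : (forall s, G s != 0 -> s \in lb) ->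
    \sum_(s <- la) G s = \sum_(s <- filter (mem lb) la) G s.
  move=> hb; rewrite big_filter [RHS]big_mkcond /=; apply: eq_bigr => s _.
  by case: ifP => // hs; apply/eqP; apply: contraFT hs => /hb.
rewrite (E l1 l2) ?(E l2 l1); first 1 last.
- by move=> s /h /andP[].
- by move=> s /h /andP[].
apply: perm_big; apply: uniq_perm; rewrite ?filter_uniq // => s.
by rewrite !mem_filter andbC.
Qed.

Lemma sum_pt (l : seq (cT S)) (a : cT S -> A) t : uniq l ->
  \sum_(s <- l) a s * (if (t : cT S) == s then 1 else 0) = if t \in l then a t else 0.
Proof.
elim: l => [|x l IH] /=; first by rewrite big_nil.
case/andP=> xl ul; rewrite big_cons IH // in_cons.
case: (eqVneq t x) => [->|]; last by rewrite mulr0 add0r.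
by rewrite (negbTE xl) mulr1 addr0.
Qed.

Lemma decomp (u : F) : u = \sum_(s <- supp u) fval u s *: e s.
Proof.
apply: frext => t; rewrite fval_sum.
under eq_bigr => s _ do rewrite fvalZ fval_e.
rewrite sum_pt ?supp_uniq //; case: ifP => // h.
by apply/eqP; apply: contraFT h => /supp_cover.
Qed.

Section Ext.
Variables (B : comNzRingType) (phi : {rmorphism A -> B}) (V : lmodType B) (f : S -> V).
Definition ext (u : F) : V := \sum_(s <- supp u) phi (fval u s) *: f s.

Lemma ext_cover (u : F) (l : seq (cT S)) : uniq l -> (forall s, fval u s != 0 -> s \in l) ->
  \sum_(s <- l) phi (fval u s) *: f s = ext u.
Proof.
move=> ul hl; apply: sum_cover_gen => //; first exact: supp_uniq.
move=> s; case: (eqVneq (fval u s) 0) => [->|h]; first by rewrite rmorph0 scale0r eqxx.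
by rewrite hl ?supp_cover.
Qed.

Lemma ext_sl : sl phi ext.
Proof.
move=> a u v; set l := undup (supp u ++ supp v).
have ul : uniq l by exact: undup_uniq.
have cu (s : S) : fval u s != 0 -> (s : cT S) \in l.
  by move=> /supp_cover h; rewrite /l mem_undup mem_cat h.
have cv (s : S) : fval v s != 0 -> (s : cT S) \in l by move=> /supp_cover h; rewrite /l mem_undup mem_cat h orbT.
rewrite -(ext_cover ul cu) -(ext_cover ul cv) -(ext_cover ul); last first.
  move=> s; rewrite fvalD fvalZ; case: (eqVneq (fval u s) 0) => [->|/cu //].
  by rewrite mulr0 add0r => /cv.
rewrite scaler_sumr -big_split /=; apply: eq_bigr => s _.
by rewrite rmorphD rmorphM scalerDl scalerA.
Qed.

Lemma ext_e s : ext (e s) = f s.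
Proof.
rewrite -(@ext_cover (e s) [:: (s : cT S)]) //; last first.
  move=> t; rewrite fval_e; case: ifP => [/eqP ->|]; last by rewrite eqxx.
  by move=> _; apply: (@mem_head (cT S)).
by rewrite big_seq1 fval_e eqxx rmorph1 scale1r.
Qed.
End Ext.

Lemma sl_decomp (B : comNzRingType) (phi : {rmorphism A -> B}) (V : lmodType B) (g : F -> V) :
  sl phi g -> forall u, g u = ext phi (fun s => g (e s)) u.
Proof.
move=> hg u; rewrite {1}(decomp u) (sl_sum hg); apply: eq_bigr => s _.
by rewrite (slZ hg).
Qed.

Lemma sl_uniq (B : comNzRingType) (phi : {rmorphism A -> B}) (V : lmodType B) (g h : F -> V) :
  sl phi g -> sl phi h -> (forall s, g (e s) = h (e s)) -> forall u, g u = h u.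
Proof.
move=> hg hh E u; rewrite (sl_decomp hg) (sl_decomp hh).
by rewrite /ext; apply: eq_bigr => s _; rewrite E.
Qed.

End FreeTheory.

From HB Require Import structures.
From mathcomp Require Import all_boot all_order all_algebra.
From Stdlib Require Import ClassicalEpsilon FunctionalExtensionality ProofIrrelevance.
Set Implicit Arguments. Unset Strict Implicit. Unset Printing Implicit Defensive.
Import Order.TTheory GRing.Theory Num.Theory.
Local Open Scope ring_scope.

Lemma lin_sl (A : comNzRingType) (U V : lmodType A) (f : U -> V) :
  lin f -> sl (idfun : {rmorphism A -> A}) f.
Proof. by []. Qed.
Lemma sl_lin (A : comNzRingType) (U V : lmodType A) (f : U -> V) :
  sl (idfun : {rmorphism A -> A}) f -> lin f.
Proof. by []. Qed.

Lemma Fr_projective (A : comNzRingType) (S : Type) : projective (Fr A S).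
Proof.
move=> M N g f lg lf sg.
pose m (s : S) : M := proj1_sig (constructive_indefinite_description _ (sg (f (e A s)))).
have hm s : g (m s) = f (e A s) by rewrite /m; case: constructive_indefinite_description.
exists (ext (idfun : {rmorphism A -> A}) m); split; first exact: (ext_sl _ m).
apply: (@sl_uniq A S A idfun N (g \o ext idfun m) f) => //.
- by move=> a u v /=; rewrite (ext_sl _ m) lg.
- by move=> s /=; rewrite ext_e.
Qed.

Section Eta.
Variables (Q R : comNzRingType) (pi : {rmorphism Q -> R}) (S : Type).

Lemma eta_supp (u : Fr Q S) : exists l : seq (cT S),
  forall s, (fun s => pi (fval u s)) s != 0 -> (s : cT S) \in l.
Proof.
case: (fsupp u) => l h; exists l => s /=.
by case: (eqVneq (fval u s) 0) => [->|/h //]; rewrite rmorph0 eqxx.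
Qed.
Definition etaF (u : Fr Q S) : Fr R S := MkFr (eta_supp u).
Lemma fval_eta u s : fval (etaF u) s = pi (fval u s). Proof. by []. Qed.
Lemma eta_sl : sl pi etaF.
Proof. by move=> a u v; apply: frext => s; rewrite !fval_eta /= rmorphD rmorphM. Qed.
Lemma eta_e s : etaF (e Q s) = e R s.
Proof. by apply: frext => t; rewrite fval_eta !fval_e; case: ifP; rewrite ?rmorph1 ?rmorph0. Qed.

Lemma eta_base_change : base_change pi etaF.
Proof.
split; first exact: eta_sl.
move=> N f hf.
pose g := ext (idfun : {rmorphism R -> R}) (fun s => f (e Q s)).
have lg : lin g by exact: (ext_sl _ _).
exists g; split => //.
- move=> m; apply: (@sl_uniq Q S R pi N (g \o etaF) f) => //.
  + by move=> a u v /=; rewrite eta_sl lg.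
  + by move=> s /=; rewrite eta_e /g ext_e.
- move=> g' lg' hg' t; apply: (@sl_uniq R S R idfun N g' g) => // s.
  by rewrite /g ext_e -eta_e hg'.
Qed.

Lemma eta_surj : (forall r : R, exists q : Q, pi q = r) ->
  forall t : Fr R S, exists w, etaF w = t.
Proof.
move=> hs t.
pose c (r : R) : Q := proj1_sig (constructive_indefinite_description _ (hs r)).
have hc r : pi (c r) = r by rewrite /c; case: constructive_indefinite_description.
exists (\sum_(s <- supp t) c (fval t s) *: e Q s).
rewrite (sl_sum eta_sl) [in RHS](decomp t); apply: eq_bigr => s _.
by rewrite (slZ eta_sl) hc eta_e.
Qed.

Variable x : Q.
Hypothesis xreg : forall q : Q, x * q = 0 -> q = 0.
Hypothesis hker : forall q : Q, pi q = 0 <-> exists a : Q, q = x * a.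

Lemma reg_Fr (w : Fr Q S) : x *: w = 0 -> w = 0.
Proof.
move=> h; apply: frext => s; apply: xreg.
by have := congr1 (fun u => fval u s) h; rewrite fvalZ.
Qed.

Definition qdiv (q : Q) : Q :=
  match excluded_middle_informative (exists a, q = x * a) with
  | left h => proj1_sig (constructive_indefinite_description _ h)
  | right _ => 0 end.
Lemma qdivP q : pi q = 0 -> q = x * qdiv q.
Proof.
move=> /hker h; rewrite /qdiv; case: excluded_middle_informative => // h'.
by case: constructive_indefinite_description.
Qed.
Lemma qdiv0 : qdiv 0 = 0.
Proof. by apply: xreg; rewrite -qdivP ?rmorph0. Qed.

Lemma div_supp (w : Fr Q S) : exists l : seq (cT S),
  forall s, (fun s => qdiv (fval w s)) s != 0 -> (s : cT S) \in l.
Proof.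
case: (fsupp w) => l h; exists l => s /=.
by case: (eqVneq (fval w s) 0) => [->|/h //]; rewrite qdiv0 eqxx.
Qed.

Lemma eta_ker (w : Fr Q S) : etaF w = 0 -> exists w', w = x *: w'.
Proof.
move=> h; exists (MkFr (div_supp w)); apply: frext => s.
rewrite fvalZ /=; apply: qdivP.
by have := congr1 (fun u => fval u s) h; rewrite fval_eta.
Qed.

Lemma eta_x (w : Fr Q S) : etaF (x *: w) = 0.
Proof. by apply: frext => s; rewrite fval_eta fvalZ rmorphM /= (proj2 (hker x)) ?mul0r //; exists 1; rewrite mulr1. Qed.
End Eta.

From HB Require Import structures.
From mathcomp Require Import all_boot all_order all_algebra.
From Stdlib Require Import ClassicalEpsilon FunctionalExtensionality ProofIrrelevance.
Set Implicit Arguments. Unset Strict Implicit. Unset Printing Implicit Defensive.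
Import Order.TTheory GRing.Theory Num.Theory.
Local Open Scope ring_scope.

Section SLComb.
Variables (A B : comNzRingType) (phi : {rmorphism A -> B}) (U : lmodType A) (V : lmodType B).
Lemma sl_addf (f g : U -> V) : sl phi f -> sl phi g -> sl phi (fun w => f w + g w).
Proof. by move=> hf hg a u v; rewrite hf hg scalerDr addrACA. Qed.
Lemma sl_oppf (f : U -> V) : sl phi f -> sl phi (fun w => - f w).
Proof. by move=> hf a u v; rewrite hf opprD scalerN. Qed.
Lemma sl_subf (f g : U -> V) : sl phi f -> sl phi g -> sl phi (fun w => f w - g w).
Proof. by move=> hf hg; apply: sl_addf => //; apply: sl_oppf. Qed.
Lemma sl_scalef (c : B) (f : U -> V) : sl phi f -> sl phi (fun w => c *: f w).
Proof. by move=> hf a u v; rewrite hf scalerDr !scalerA mulrC. Qed.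
Lemma sl_zerof : sl phi (fun _ : U => (0 : V)).
Proof. by move=> a u v; rewrite scaler0 addr0. Qed.
Lemma sl_compl (W : lmodType B) (f : U -> V) (g : V -> W) :
  sl phi f -> sl (idfun : {rmorphism B -> B}) g -> sl phi (fun w => g (f w)).
Proof. by move=> hf hg a u v; rewrite hf hg. Qed.
Lemma sl_compr (W : lmodType A) (f : W -> U) (g : U -> V) :
  sl (idfun : {rmorphism A -> A}) f -> sl phi g -> sl phi (fun w => g (f w)).
Proof. by move=> hf hg a u v; rewrite hf hg. Qed.
End SLComb.
Lemma sl_idf (A : comNzRingType) (U : lmodType A) : sl (idfun : {rmorphism A -> A}) (fun u : U => u).
Proof. by []. Qed.

Definition sigma (A : comNzRingType) (L0 L1 L2 : Type) : Fr A (L1 + L0) -> Fr A (L2 + L1) :=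
  ext (idfun : {rmorphism A -> A}) (fun s => match s with inl g => e A (inr g : L2 + L1) | inr _ => 0 end).
Arguments sigma {A L0 L1 L2}.

Lemma sigma_sl (A : comNzRingType) (L0 L1 L2 : Type) :
  sl (idfun : {rmorphism A -> A}) (@sigma A L0 L1 L2).
Proof. exact: ext_sl. Qed.
Lemma sigma_inl (A : comNzRingType) (L0 L1 L2 : Type) g :
  @sigma A L0 L1 L2 (e A (inl g)) = e A (inr g).
Proof. by rewrite /sigma ext_e. Qed.
Lemma sigma_inr (A : comNzRingType) (L0 L1 L2 : Type) g :
  @sigma A L0 L1 L2 (e A (inr g)) = 0.
Proof. by rewrite /sigma ext_e. Qed.
Lemma sigma_sigma (A : comNzRingType) (L0 L1 L2 L3 : Type) v :
  @sigma A L1 L2 L3 (@sigma A L0 L1 L2 v) = 0.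
Proof.
apply (@sl_uniq A _ A idfun _ (fun v => sigma (sigma v)) (fun _ => 0)).
- exact: sl_compr (@sigma_sl _ _ _ _) (@sigma_sl _ _ _ _).
- exact: sl_zerof.
- by case=> g; rewrite ?sigma_inl ?sigma_inr ?(sl0 (@sigma_sl _ _ _ _)).
Qed.

Unset Implicit Arguments.
Section Construction.
Variables (Q R : comNzRingType) (pi : {rmorphism Q -> R}) (x : Q) (X : complex R) (n0 : int).
Local Notation idQ := (idfun : {rmorphism Q -> Q}).

Definition lev (m : nat) : int := n0 - 1 + m%:Z.

Record stage (m : nat) := Stage { L0 : Type; L1 : Type; L2 : Type;
  dd : Fr Q (L2 + L1) -> Fr Q (L1 + L0); qq : Fr Q (L2 + L1) -> X (lev m) }.
Arguments dd {m} s _. Arguments qq {m} s _.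
Arguments L0 {m} s. Arguments L1 {m} s. Arguments L2 {m} s.

Definition Req m (s : stage m) := {p : Fr Q (L2 s + L1 s) * X (lev m.+1) |
  dd s p.1 = 0 /\ qq s p.1 = cdif X (lev m.+1) (lev m) p.2}.
Arguments Req {m} s.

Definition next m (s : stage m) : stage m.+1 :=
  @Stage m.+1 (L1 s) (L2 s) (Req s)
   (ext idQ (fun g => match g with inl r => (sval r).1
       | inr h => x *: e Q (inl h) - sigma (dd s (e Q (inl h))) end))
   (ext pi (fun g => match g with inl r => (sval r).2 | inr _ => 0 end)).
Arguments next {m} s.

Definition st0 : stage 0 := @Stage 0 void void void (fun _ => 0) (fun _ => 0).

Fixpoint st m : stage m := match m with 0 => st0 | S m' => next (st m') end.

Notation W m := (Fr Q (L2 (st m) + L1 (st m))).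
Definition d m : W m.+1 -> W m := dd (st m.+1).
Definition q m : W m -> X (lev m) := qq (st m).
Definition sg m : W m -> W m.+1 := @sigma Q _ _ _.

Lemma dd_sl m : sl idQ (dd (st m)).
Proof. by case: m => [|m]; [exact: sl_zerof | exact: ext_sl]. Qed.
Lemma d_sl m : sl idQ (d m). Proof. exact: dd_sl. Qed.
Lemma qq_sl m : sl pi (qq (st m)).
Proof. by case: m => [|m]; [exact: sl_zerof | exact: ext_sl]. Qed.
Lemma sg_sl m : sl idQ (sg m). Proof. exact: sigma_sl. Qed.

Lemma W0 (w : W 0) : w = 0.
Proof. by apply: frext => -[[]|[]]. Qed.

Lemma d_inl m (r : Req (st m)) : d m (e Q (inl r)) = (sval r).1.
Proof. by rewrite /d /= ext_e. Qed.
Lemma d_inr m (h : L2 (st m)) :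
  d m (e Q (inr h)) = x *: e Q (inl h) - sigma (dd (st m) (e Q (inl h))).
Proof. by rewrite /d /= ext_e. Qed.
Lemma q_inl m (r : Req (st m)) : q m.+1 (e Q (inl r)) = (sval r).2.
Proof. by rewrite /q /= ext_e. Qed.
Lemma q_inr m (h : L2 (st m)) : q m.+1 (e Q (inr h)) = 0.
Proof. by rewrite /q /= ext_e. Qed.

(* homotopy: d sigma + sigma d = x *)
Lemma homot m (w : W m) : d m (sg m w) = x *: w - sigma (dd (st m) w).
Proof.
apply (@sl_uniq Q _ Q idQ _ (fun w => d m (sg m w)) (fun w => x *: w - sigma (dd (st m) w))).
- exact: sl_compr (sg_sl m) (d_sl m).
- apply: sl_subf; first exact: sl_scalef (@sl_idf Q _).
  exact: sl_compr (dd_sl m) (@sigma_sl _ _ _ _).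
clear w; move=> [h|h]; first by rewrite /sg sigma_inl d_inr.
rewrite /sg sigma_inr (sl0 (d_sl m)).
case: m h => [[]|m] h.
have -> : dd (st m.+1) (e Q (inr h)) = d m (e Q (inr h)) by [].
rewrite d_inr (slB (@sigma_sl _ _ _ _)) (slZ (@sigma_sl _ _ _ _)) sigma_inl sigma_sigma.
by rewrite /= subr0 subrr.
Qed.

Lemma qq_sigma m (L : Type) (v : Fr Q (L1 (st m) + L)) : qq (st m) (sigma v) = 0.
Proof.
case: m L v => [|m] L v; first by [].
move: v; apply (@sl_uniq Q _ R pi _ (fun v => qq (st m.+1) (sigma v)) (fun _ => 0)).
- exact: sl_compr (@sigma_sl _ _ _ _) (qq_sl _).
- exact: sl_zerof.
by case=> g; rewrite ?sigma_inl ?sigma_inr ?(sl0 (qq_sl _)) // [qq _ _]q_inr.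
Qed.

Lemma dd_d m (w : W m.+1) : dd (st m) (d m w) = 0.
Proof.
elim: m w => [|m IH] w; first by [].
apply (@sl_uniq Q _ Q idQ _ (fun w => dd (st m.+1) (d m.+1 w)) (fun _ => 0)).
- exact: sl_compr (d_sl _) (dd_sl _).
- exact: sl_zerof.
case=> [r|h]; first by rewrite d_inl; case: (svalP r).
rewrite d_inr (slB (dd_sl _)) (slZ (dd_sl _)).
have H := homot m (dd (st m.+1) (e Q (inl h))); rewrite /d /sg in H; rewrite H.
by rewrite IH (sl0 (@sigma_sl _ _ _ _)) subr0 subrr.
Qed.

Hypothesis pix : pi x = 0.

Lemma q_chain m (w : W m.+1) :
  qq (st m) (d m w) = cdif X (lev m.+1) (lev m) (q m.+1 w).
Proof.
move: w; apply (@sl_uniq Q _ R pi _ (fun w => qq (st m) (d m w))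
   (fun w => cdif X (lev m.+1) (lev m) (q m.+1 w))).
- exact: sl_compr (d_sl m) (qq_sl m).
- exact: sl_compl (qq_sl m.+1) (lin_sl (cdif_lin X (lev m.+1) (lev m))).
case=> [r|h].
- by rewrite d_inl q_inl; case: (svalP r).
rewrite d_inr q_inr (slB (qq_sl m)) (slZ (qq_sl m)) pix scale0r qq_sigma.
by rewrite (sl0 (lin_sl (cdif_lin X (lev m.+1) (lev m)))) subr0.
Qed.

Lemma W_surj m (y : X (lev m.+1)) : cdif X (lev m.+1) (lev m) y = 0 ->
  exists w : W m.+1, d m w = 0 /\ q m.+1 w = y.
Proof.
move=> hy.
have P : dd (st m) (0 : W m) = 0 /\ qq (st m) (0 : W m) = cdif X (lev m.+1) (lev m) y.
  by rewrite (sl0 (dd_sl m)) (sl0 (qq_sl m)) hy.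
exists (e Q (inl (exist _ ((0 : W m), y) P : Req (st m)))).
by rewrite d_inl q_inl.
Qed.

Lemma W_inj m (w : W m) (z : X (lev m.+1)) : dd (st m) w = 0 ->
  qq (st m) w = cdif X (lev m.+1) (lev m) z -> exists a : W m.+1, d m a = w.
Proof.
move=> h1 h2.
by exists (e Q (inl (exist _ (w, z) (conj h1 h2) : Req (st m)))); rewrite d_inl.
Qed.

Local Notation idR := (idfun : {rmorphism R -> R}).
Notation T m := (Fr R (L2 (st m) + L1 (st m))).
Definition et m : W m -> T m := @etaF _ _ pi _.
Definition dT m : T m.+1 -> T m := ext idR (fun s => @etaF _ _ pi _ (d m (e Q s))).
Definition sT m : T m -> T m.+1 := sigma.
Definition qT m : T m -> X (lev m) := ext idR (fun s => q m (e Q s)).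

Lemma et_sl m : sl pi (et m). Proof. exact: eta_sl. Qed.
Lemma dT_sl m : sl idR (dT m). Proof. exact: ext_sl. Qed.
Lemma sT_sl m : sl idR (sT m). Proof. exact: sigma_sl. Qed.
Lemma qT_sl m : sl idR (qT m). Proof. exact: ext_sl. Qed.

Lemma dT_et m w : dT m (et m.+1 w) = et m (d m w).
Proof.
move: w; apply (@sl_uniq Q _ R pi _ (fun w => dT m (et m.+1 w)) (fun w => et m (d m w))).
- exact: sl_compl (et_sl _) (dT_sl m).
- exact: sl_compr (d_sl m) (et_sl m).
by move=> s; rewrite /et eta_e /dT ext_e.
Qed.

Lemma sT_et m w : sT m (et m w) = et m.+1 (sg m w).
Proof.
move: w; apply (@sl_uniq Q _ R pi _ (fun w => sT m (et m w)) (fun w => et m.+1 (sg m w))).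
- exact: sl_compl (et_sl _) (sT_sl m).
- exact: sl_compr (sg_sl m) (et_sl _).
move=> s; rewrite /et eta_e /sT /sg; case: s => g.
  by rewrite !sigma_inl eta_e.
by rewrite !sigma_inr (sl0 (@eta_sl _ _ pi _)).
Qed.

Lemma qT_et m w : qT m (et m w) = q m w.
Proof.
move: w; apply (@sl_uniq Q _ R pi _ (fun w => qT m (et m w)) (fun w => q m w)).
- exact: sl_compl (et_sl _) (qT_sl m).
- exact: qq_sl.
by move=> s; rewrite /et eta_e /qT ext_e.
Qed.

Hypothesis pi_surj : forall r : R, exists q : Q, pi q = r.
Hypothesis xreg : forall q : Q, x * q = 0 -> q = 0.
Hypothesis hker : forall q : Q, pi q = 0 <-> exists a : Q, q = x * a.

Lemma et_surj m (t : T m) : exists w, et m w = t.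
Proof. exact: eta_surj. Qed.

Lemma T0 (t : T 0) : t = 0.
Proof. by apply: frext => -[[]|[]]. Qed.

Lemma T0eq (a b : T 0) : a = b.
Proof. by rewrite (T0 a) (T0 b). Qed.

Lemma et_x m (w : W m) : et m (x *: w) = 0.
Proof. exact: eta_x. Qed.

Lemma et_ker m (w : W m) : et m w = 0 -> exists w', w = x *: w'.
Proof. exact: eta_ker. Qed.

Lemma W_reg m (w : W m) : x *: w = 0 -> w = 0.
Proof. exact: reg_Fr. Qed.

Lemma dTdT m t : dT m (dT m.+1 t) = 0.
Proof.
have [w <-] := et_surj _ t.
by rewrite !dT_et; have := dd_d m.+1 w; rewrite /d => ->; rewrite (sl0 (et_sl _)).
Qed.

Lemma homT m (t : T m.+1) : dT m.+1 (sT m.+1 t) + sT m (dT m t) = 0.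
Proof.
have [w <-] := et_surj _ t.
rewrite sT_et dT_et dT_et sT_et -(slD (et_sl _)).
have := homot m.+1 w; rewrite /d /sg => ->.
by rewrite subrK et_x.
Qed.

Lemma sTsT m t : sT m.+1 (sT m t) = 0.
Proof. exact: sigma_sigma. Qed.

Lemma qT_sT m t : qT m.+1 (sT m t) = 0.
Proof.
have [w <-] := et_surj _ t.
by rewrite sT_et qT_et /q /sg qq_sigma.
Qed.

Lemma qT_chain m t : qT m (dT m t) = cdif X (lev m.+1) (lev m) (qT m.+1 t).
Proof.
have [w <-] := et_surj _ t.
by rewrite dT_et !qT_et; exact: q_chain.
Qed.


Fixpoint G m : lmodType R := match m with S (S m') => (T m' * G m')%type | _ => T 0 end.
Definition Fm m : lmodType R := (T m * G m)%type.

Definition ex m : G m.+1 -> T m :=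
  match m return G m.+1 -> T m with 0 => fun _ => 0 | S m' => fun g => sT m' g.1 end.

Fixpoint dG m : G m.+1 -> G m :=
  match m return G m.+1 -> G m with
  | 0 => fun _ => 0
  | 1 => fun _ => 0
  | S (S m') => fun g => (dT m' g.1 + ex m' g.2, dG m' g.2) end.

Definition dF m (p : Fm m.+1) : Fm m := (dT m p.1 + ex m p.2, dG m p.2).
Definition qF m (p : Fm m) : X (lev m) := qT m p.1.
Definition alF m (t : T m) : Fm m := (t, 0).
Definition bt m : Fm m -> Fm m.-2 :=
  match m return Fm m -> Fm m.-2 with S (S m') => fun p => p.2 | _ => fun _ => 0 end.
Definition sec m : Fm m.-2 -> Fm m :=
  match m return Fm m.-2 -> Fm m with S (S m') => fun z => (0, z) | _ => fun _ => 0 end.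

Lemma pZ1 (A : comNzRingType) (V1 V2 : lmodType A) a (p : (V1 * V2)%type) : (a *: p).1 = a *: p.1.
Proof. by []. Qed.
Lemma pZ2 (A : comNzRingType) (V1 V2 : lmodType A) a (p : (V1 * V2)%type) : (a *: p).2 = a *: p.2.
Proof. by []. Qed.
Lemma pD1 (A : comNzRingType) (V1 V2 : lmodType A) (p p' : (V1 * V2)%type) : (p + p').1 = p.1 + p'.1.
Proof. by []. Qed.
Lemma pD2 (A : comNzRingType) (V1 V2 : lmodType A) (p p' : (V1 * V2)%type) : (p + p').2 = p.2 + p'.2.
Proof. by []. Qed.
Lemma pN1 (A : comNzRingType) (V1 V2 : lmodType A) (p : (V1 * V2)%type) : (- p).1 = - p.1.
Proof. by []. Qed.
Lemma pN2 (A : comNzRingType) (V1 V2 : lmodType A) (p : (V1 * V2)%type) : (- p).2 = - p.2.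
Proof. by []. Qed.
Lemma p01 (A : comNzRingType) (V1 V2 : lmodType A) : (0 : (V1 * V2)%type).1 = 0.
Proof. by []. Qed.
Lemma p02 (A : comNzRingType) (V1 V2 : lmodType A) : (0 : (V1 * V2)%type).2 = 0.
Proof. by []. Qed.
Lemma pairE (A : comNzRingType) (V1 V2 : lmodType A) (p : (V1 * V2)%type) : p = (p.1, p.2).
Proof. by case: p. Qed.
Lemma pair_eq0 (A : comNzRingType) (V1 V2 : lmodType A) (a : V1) (b : V2) :
  ((a, b) : (V1 * V2)%type) = 0 <-> a = 0 /\ b = 0.
Proof. by split => [[-> ->]|[-> ->]]. Qed.

Lemma nat2_ind (P : nat -> Prop) : P 0 -> P 1 -> (forall m, P m -> P m.+2) -> forall m, P m.
Proof.
move=> h0 h1 hs m; suff : P m /\ P m.+1 by case.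
by elim: m => [|m [IH1 IH2]]; split => //; apply: hs.
Qed.

Lemma pair_sl (A : comNzRingType) (U V1 V2 : lmodType A) (f1 : U -> V1) (f2 : U -> V2) :
  sl (idfun : {rmorphism A -> A}) f1 -> sl (idfun : {rmorphism A -> A}) f2 ->
  sl (idfun : {rmorphism A -> A}) (fun u => ((f1 u, f2 u) : (V1 * V2)%type)).
Proof. by move=> h1 h2 a u v; rewrite h1 h2. Qed.
Lemma fst_sl (A : comNzRingType) (V1 V2 : lmodType A) :
  sl (idfun : {rmorphism A -> A}) (fun p : (V1 * V2)%type => p.1).
Proof. by []. Qed.
Lemma snd_sl (A : comNzRingType) (V1 V2 : lmodType A) :
  sl (idfun : {rmorphism A -> A}) (fun p : (V1 * V2)%type => p.2).
Proof. by []. Qed.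

Lemma ex_sl m : sl idR (ex m).
Proof. case: m => [|m]; first exact: sl_zerof. by move=> a u v /=; rewrite (sT_sl m). Qed.

Lemma dG_sl m : sl idR (dG m).
Proof.
elim/nat2_ind: m; [exact: sl_zerof | exact: sl_zerof |] => m IH.
move=> a u v /=; congr pair; last exact: IH.
by rewrite ?pZ1 ?pD1 /= (dT_sl m) (ex_sl m) scalerDr addrACA.
Qed.

Lemma dF_sl m : sl idR (dF m).
Proof.
move=> a u v; rewrite /dF /=; congr pair; last exact: (dG_sl m).
by rewrite ?pZ1 ?pD1 /= (dT_sl m) (ex_sl m) scalerDr addrACA.
Qed.

Lemma qF_sl m : sl idR (qF m).
Proof. by move=> a u v; rewrite /qF /= (qT_sl m). Qed.

Lemma Fm0 (p : Fm 0) : p = 0.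
Proof. by case: p => a b; rewrite (T0 a) (T0 b). Qed.

Lemma sT_ex m g : sT m (ex m g) = 0.
Proof. by case: m g => [|m] g /=; [rewrite (sl0 (sT_sl _)) | exact: sTsT]. Qed.

Lemma dFdF1 m (p : Fm m.+2) : dT m (dT m.+1 p.1 + ex m.+1 p.2) + ex m (dG m.+1 p.2) = 0.
Proof.
rewrite (slD (dT_sl _)) dTdT add0r.
case: m p => [|m] [p1 p2] /=.
  by rewrite (T0 p2.1) (sl0 (sT_sl _)) (sl0 (dT_sl _)) addr0.
by rewrite (slD (sT_sl _)) addrA homT add0r sT_ex.
Qed.

Lemma dFdF m (p : Fm m.+2) : dF m (dF m.+1 p) = 0.
Proof.
elim/nat2_ind: m p => [p|p|m IH p]; first exact: Fm0.
- by apply/pair_eq0; split; [exact: dFdF1 | ].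
apply/pair_eq0; split; first exact: dFdF1.
exact: IH.
Qed.

Lemma qF_chain m (p : Fm m.+1) : qF m (dF m p) = cdif X (lev m.+1) (lev m) (qF m.+1 p).
Proof.
rewrite /qF /dF /= (slD (qT_sl _)) qT_chain.
case: m p => [|m] p /=; first by rewrite (sl0 (qT_sl _)) addr0.
by rewrite qT_sT addr0.
Qed.

Lemma du0 k (w0 : W k.+2) (w1 : W k) (u0 : W k.+1) :
  d k.+1 w0 + sg k w1 = x *: u0 -> x *: d k u0 = x *: w1 - sigma (dd (st k) w1).
Proof.
move=> h; have := congr1 (d k) h.
rewrite (slD (d_sl k)) (slZ (d_sl k)) homot /=.
by have := dd_d k.+1 w0; rewrite /d => ->; rewrite add0r => <-.
Qed.

Lemma W_regB m (a b : W m) : x *: a = x *: b -> a = b.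
Proof. by move=> h; apply/eqP; rewrite -subr_eq0; apply/eqP/W_reg; rewrite scalerBr h subrr. Qed.

Lemma FS k (p : Fm k.+2) (w0 : W k.+2) (w1 : W k) (u0 : W k.+1) :
  dF k.+1 p = 0 -> et _ w0 = p.1 -> et _ w1 = p.2.1 -> d k.+1 w0 + sg k w1 = x *: u0 ->
  exists eta : Fm k.+1, [/\ dF k eta = p.2, eta.1 = et _ u0 & sg k (d k u0) = sg k w1].
Proof.
elim/nat2_ind: k p w0 w1 u0 => [p w0 w1 u0 hc h0 h1 hu|p w0 w1 u0 hc h0 h1 hu|k IH p w0 w1 u0 hc h0 h1 hu].
- exists (et _ u0, 0); split => //; first by rewrite (Fm0 (dF _ _)) (Fm0 p.2).
  by rewrite (W0 (d 0 u0)) (W0 w1).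
- have E := du0 _ _ _ _ hu.
  have E2 : d 1 u0 = w1.
    apply: W_regB; rewrite E.
    have -> : dd (st 1) w1 = 0 by exact: W0.
    by rewrite (sl0 (@sigma_sl _ _ _ _)) subr0.
  exists (et _ u0, 0); split => //; last by rewrite E2.
  rewrite [RHS]pairE /dF /=; congr pair; last exact: T0eq.
  by rewrite dT_et E2 h1 (sl0 (sT_sl _)) addr0.
case: (et_surj _ p.2.2.1) => w2 h2.
have hc2 : dF k.+1 p.2 = 0 by have := congr1 snd hc.
have hz : et _ (d k.+1 w1 + sg k w2) = 0.
  rewrite (slD (et_sl _)) -dT_et -sT_et h1 h2.
  by have := congr1 fst hc2.
case: (et_ker _ _ hz) => u1 hu1.
case: (IH p.2 w1 w2 u1 hc2 h1 h2 hu1) => eta' [He1 He2 He3].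
have E := du0 _ _ _ _ hu.
have E2 : d k.+2 u0 = w1 - sg k.+1 u1.
  apply: W_regB; rewrite E scalerBr.
  have -> : sigma (dd (st k.+2) w1) = sg k.+1 (d k.+1 w1) by [].
  have -> : d k.+1 w1 = x *: u1 - sg k w2 by rewrite -hu1 addrK.
  by rewrite (slB (sg_sl _)) (slZ (sg_sl _)) /sg sigma_sigma subr0.
exists (et _ u0, eta'); split => //.
- rewrite [RHS]pairE /dF /=; congr pair; last exact: He1.
  rewrite dT_et He2 sT_et -(slD (et_sl k.+2)) E2 subrK; exact: h1.
- by rewrite E2 (slB (sg_sl _)) /sg sigma_sigma subr0.
Qed.

Lemma F_inj m (p : Fm m.+1) (z : X (lev m.+2)) : dF m p = 0 ->
  qF m.+1 p = cdif X (lev m.+2) (lev m.+1) z -> exists a : Fm m.+2, dF m.+1 a = p.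
Proof.
case: m p z => [|k] p z hc hq.
  case: (et_surj _ p.1) => w0 h0.
  have hw : dd (st 1) w0 = 0 by exact: W0.
  have hq' : qq (st 1) w0 = cdif X (lev 2) (lev 1) z by rewrite -hq /qF -h0 qT_et.
  case: (W_inj _ _ _ hw hq') => a ha.
  exists (et _ a, 0); rewrite [RHS]pairE /dF /=; congr pair; last exact: T0eq.
  by rewrite dT_et ha h0 (sl0 (sT_sl _)) addr0.
case: (et_surj _ p.1) => w0 h0.
case: (et_surj _ p.2.1) => w1 h1.
have hz : et _ (d k.+1 w0 + sg k w1) = 0.
  rewrite (slD (et_sl _)) -dT_et -sT_et h0 h1.
  by have := congr1 fst hc.
case: (et_ker _ _ hz) => u0 hu.
case: (FS _ _ _ _ _ hc h0 h1 hu) => eta [He1 He2 He3].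
set w := w0 - sg k.+1 u0.
have hw : dd (st k.+2) w = 0.
  have -> : dd (st k.+2) w = d k.+1 w by [].
  rewrite /w (slB (d_sl _)) homot.
  have -> : sigma (dd (st k.+1) u0) = sg k (d k u0) by [].
  by rewrite He3 opprB addrA -hu subrr.
have hq' : qq (st k.+2) w = cdif X (lev k.+3) (lev k.+2) z.
  rewrite -hq /qF -h0 qT_et /w (slB (qq_sl _)).
  by have := qq_sigma k.+2 _ u0; rewrite /sg => ->; rewrite subr0.
case: (W_inj _ _ _ hw hq') => a ha.
exists (et _ a, eta); rewrite [RHS]pairE /dF /=; congr pair; last exact: He1.
by rewrite dT_et ha He2 sT_et -(slD (et_sl k.+2)) /w subrK.
Qed.

Lemma F_surj m (y : X (lev m.+1)) : cdif X (lev m.+1) (lev m) y = 0 ->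
  exists p : Fm m.+1, dF m p = 0 /\ qF m.+1 p = y.
Proof.
move=> hy; case: (W_surj _ _ hy) => w [h1 h2].
exists (et _ w, 0); split; last by rewrite /qF qT_et.
apply/pair_eq0; split; last exact: (sl0 (dG_sl _)).
by rewrite /= dT_et h1 (sl0 (et_sl _)) (sl0 (ex_sl _)) addr0.
Qed.

Lemma alF_chain m (t : T m.+1) : dF m (alF m.+1 t) = alF m (dT m t).
Proof. by rewrite /dF /alF /= (sl0 (ex_sl _)) (sl0 (dG_sl _)) addr0. Qed.
End Construction.

From HB Require Import structures.
From mathcomp Require Import all_boot all_order all_algebra.
From Stdlib Require Import ClassicalEpsilon FunctionalExtensionality ProofIrrelevance.
Set Implicit Arguments. Unset Strict Implicit. Unset Printing Implicit Defensive.
Import Order.TTheory GRing.Theory Num.Theory.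
Local Open Scope ring_scope.
From Stdlib Require Import PeanoNat.
Unset Implicit Arguments.

Section Idx.
Variable c : int.
Definition lv (m : nat) : int := c + m%:Z.
Definition kk (i : int) : nat := match (i - c)%R with Posz k => k | Negz _ => 0 end.

Lemma kk_lv m : kk (lv m) = m.
Proof. by rewrite /kk /lv addrAC subrr add0r. Qed.

Lemma lvS m : lv m.+1 = lv m + 1.
Proof. by rewrite /lv -addrA -PoszD addn1. Qed.
Lemma lvS1 m : lv m.+1 - 1 = lv m.
Proof. by rewrite lvS addrK. Qed.
Lemma lvSS2 m : lv m.+2 - 2 = lv m.
Proof. by rewrite lvS lvS -addrA addrK. Qed.
Lemma lv_ge m : c <= lv m.
Proof. by rewrite /lv lerDl. Qed.

Lemma kk_cases i : i = lv (kk i) \/ (kk i = 0%N /\ i < c).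
Proof.
rewrite /kk; case E: (i - c) => [k|k].
  by left; rewrite /lv -E addrC subrK.
right; split => //; rewrite -subr_lt0 E //.
Qed.

Lemma kk_succ i m : kk i = m.+1 -> i = lv m.+1.
Proof.
move=> h; case: (kk_cases i) => [|[]]; first by rewrite h.
by rewrite h.
Qed.

Lemma kk_pred i m : kk i = m.+1 -> kk (i - 1) = m /\ i - 1 = lv m.
Proof.
move=> /kk_succ ->; rewrite lvS1; split => //; exact: kk_lv.
Qed.

Lemma kk_next i m : i = lv m -> kk (i + 1) = m.+1 /\ i + 1 = lv m.+1.
Proof. by move=> ->; rewrite -lvS kk_lv. Qed.

Lemma kk_neg (z : int) : z < 0 -> match z with Posz k => k | Negz _ => 0%N end = 0%N.
Proof. by case: z. Qed.

Lemma kk_m2 i : kk (i - 2) = (kk i).-2.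
Proof.
case: (kk_cases i) => [E|[E lt]].
- rewrite [in RHS]E kk_lv; move: E; case: (kk i) => [|[|m]] E; subst i.
  + by rewrite /kk /lv addr0 addrAC subrr add0r.
  + by rewrite /kk /lv addrAC [c + _]addrC addrK.
  + by rewrite lvSS2 kk_lv.
- rewrite E /kk; apply: kk_neg.
  rewrite subr_lt0; apply: (@lt_trans _ _ i) => //; by rewrite ltrBlDr ltrDl.
Qed.
End Idx.

Definition castT (A : comNzRingType) (I : eqType) (M : I -> lmodType A) (a b : I) : M a -> M b :=
  match a =P b with ReflectT e => fun v => eq_rect a M v b e | ReflectF _ => fun _ => 0 end.

Lemma castT_id (A : comNzRingType) (I : eqType) (M : I -> lmodType A) a (v : M a) :
  castT A I M a a v = v.
Proof.
rewrite /castT; case: eqP => // e.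
by rewrite (eq_axiomK e).
Qed.
Lemma castT_ne (A : comNzRingType) (I : eqType) (M : I -> lmodType A) a b (v : M a) :
  a <> b -> castT A I M a b v = 0.
Proof. by rewrite /castT; case: eqP. Qed.
Lemma castT0 (A : comNzRingType) (I : eqType) (M : I -> lmodType A) a b :
  castT A I M a b 0 = 0.
Proof. by case: (eqVneq a b) => [->|/eqP h]; [rewrite castT_id | rewrite castT_ne]. Qed.
Lemma castT_sl (A : comNzRingType) (I : eqType) (M : I -> lmodType A) a b :
  sl (idfun : {rmorphism A -> A}) (castT A I M a b).
Proof.
case: (eqVneq a b) => [<-|/eqP h] k u v; first by rewrite !castT_id.
by rewrite !castT_ne // scaler0 addr0.
Qed.

Section Tower.
Variables (A : comNzRingType) (M : nat -> lmodType A) (dM : forall m, M m.+1 -> M m).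
Hypothesis dM_sl : forall m, sl (idfun : {rmorphism A -> A}) (dM m).
Hypothesis dMdM : forall m v, dM m (dM m.+1 v) = 0.
Hypothesis M0 : forall v : M 0, v = 0.

Definition cM := castT A nat M.
Definition D (a b : nat) : M a -> M b :=
  match a return M a -> M b with 0 => fun _ => 0 | S a' => fun v => cM a' b (dM a' v) end.

Lemma D_sl a b : sl (idfun : {rmorphism A -> A}) (D a b).
Proof.
case: a => [|a] k u v /=; first by rewrite scaler0 addr0.
by rewrite /cM (dM_sl a) (castT_sl _ _ _ a b).
Qed.
Lemma D0 a b : D a b 0 = 0. Proof. exact: (sl0 (D_sl a b)). Qed.
Lemma D_succ b v : D b.+1 b v = dM b v.
Proof. by rewrite /= /cM castT_id. Qed.
Lemma D_ne a b v : a <> b.+1 -> D a b v = 0.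
Proof.
case: a v => [|a] v h //=; rewrite /cM castT_ne //.
by move=> e; apply: h; rewrite e.
Qed.
Lemma Mz a (v : M a) : a = 0%N -> v = 0.
Proof. by move=> e; subst a; exact: M0. Qed.

Lemma DD a b c v : D b c (D a b v) = 0.
Proof.
case: (eqVneq a b.+1) => [e|/eqP ne]; last by rewrite (D_ne a b v ne) D0.
subst a; rewrite D_succ.
case: b v => [|b] v; first by [].
case: (eqVneq b c) => [<-|/eqP ne]; first by rewrite D_succ dMdM.
by rewrite D_ne // => -[].
Qed.

Lemma D_deg (c : int) i j v : j != i - 1 -> D (kk c i) (kk c j) v = 0.
Proof.
move=> hij; case: (eqVneq (kk c i) (kk c j).+1) => [e|/eqP ne]; last by rewrite D_ne.
case E: (kk c j) => [|m].
  by apply: Mz.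
have [_ h2] := kk_pred c i m.+1 (etrans e (congr1 S E)).
by move: hij; rewrite h2 -(kk_succ c j m E) eqxx.
Qed.

Definition cpx (c : int) : complex A :=
  @Complex A (fun i => M (kk c i)) (fun i j => D (kk c i) (kk c j))
    (fun i j => D_sl (kk c i) (kk c j)) (@D_deg c)
    (fun i j k v => DD (kk c i) (kk c j) (kk c k) v).
End Tower.

Section TowerMap.
Variables (A B : comNzRingType) (phi : {rmorphism A -> B}).
Variables (M : nat -> lmodType A) (dM : forall m, M m.+1 -> M m).
Variables (M' : nat -> lmodType B) (dM' : forall m, M' m.+1 -> M' m).
Hypothesis dM_sl : forall m, sl (idfun : {rmorphism A -> A}) (dM m).
Hypothesis dM'_sl : forall m, sl (idfun : {rmorphism B -> B}) (dM' m).
Variable f : forall m, M m -> M' m.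
Hypothesis f_sl : forall m, sl phi (f m).
Hypothesis f_comm : forall m v, f m (dM m v) = dM' m (f m.+1 v).

Lemma tower_map a b v : f b (D A M dM a b v) = D B M' dM' a b (f a v).
Proof.
case: a v => [|a] v /=; first exact: (sl0 (f_sl b)).
case: (eqVneq a b) => [<-|/eqP ne]; first by rewrite /cM !castT_id f_comm.
by rewrite /cM !castT_ne // (sl0 (f_sl b)).
Qed.
End TowerMap.

Definition castX (R : comNzRingType) (X : complex R) (i j : int) : X i -> X j :=
  castT R int (fun i => X i) i j.

Section TowerX.
Variables (B R : comNzRingType) (phi : {rmorphism B -> R}) (X : complex R) (c : int).
Variables (M : nat -> lmodType B) (dM : forall m, M m.+1 -> M m).
Hypothesis dM_sl : forall m, sl (idfun : {rmorphism B -> B}) (dM m).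
Hypothesis dMdM : forall m v, dM m (dM m.+1 v) = 0.
Hypothesis M0 : forall v : M 0, v = 0.
Variable qM : forall m, M m -> X (lv c m).
Hypothesis qM_sl : forall m, sl phi (qM m).
Hypothesis qM_chain : forall m v, qM m (dM m v) = cdif X (lv c m.+1) (lv c m) (qM m.+1 v).

Definition qI (i : int) (v : M (kk c i)) : X i := castX R X (lv c (kk c i)) i (qM (kk c i) v).

Lemma cdif0 i j : cdif X i j 0 = 0.
Proof. exact: (sl0 (lin_sl (cdif_lin X i j))). Qed.

Lemma qI_sl i : sl phi (qI i).
Proof.
move=> a u v; rewrite /qI (qM_sl (kk c i)) /castX.
by rewrite (castT_sl _ _ (fun i => X i)).
Qed.

Lemma qI0 i : qI i 0 = 0.
Proof. exact: (sl0 (qI_sl i)). Qed.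

Lemma qI_chain_gen a b i j (v : M a) : a = b.+1 -> i = lv c a -> j = lv c b ->
  castX R X (lv c b) j (qM b (D B M dM a b v)) = cdif X i j (castX R X (lv c a) i (qM a v)).
Proof.
move=> ea ei ej; subst a i j.
by rewrite /castX !castT_id D_succ qM_chain.
Qed.

Lemma qI_chain i j v : qI j (D B M dM (kk c i) (kk c j) v) = cdif X i j (qI i v).
Proof.
case: (eqVneq j (i - 1)) => [ej|ne]; last first.
  by rewrite D_deg // qI0 (cdif_deg X) //.
subst j.
have [E|[m E]] : kk c i = 0%N \/ exists m, kk c i = m.+1.
  by case: (kk c i) => [|m]; [left | right; exists m].
  have -> : v = 0 by apply: Mz.
  by rewrite D0 // (qI0 (i - 1)) (qI0 i) cdif0.
have [E1 E2] := kk_pred c i m E.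
apply: qI_chain_gen; first by rewrite E E1.
  by case: (kk_cases c i) => [//|[]]; rewrite E.
by rewrite E1.
Qed.

Hypothesis Hsurj : forall m (y : X (lv c m.+1)), cdif X (lv c m.+1) (lv c m) y = 0 ->
  exists v : M m.+1, dM m v = 0 /\ qM m.+1 v = y.
Hypothesis Hinj : forall m (v : M m.+1) (z : X (lv c m.+2)), dM m v = 0 ->
  qM m.+1 v = cdif X (lv c m.+2) (lv c m.+1) z -> exists a : M m.+2, dM m.+1 a = v.
Hypothesis Hz : forall j, j <= c -> homology_zero X j.

Lemma kk0_le j : kk c j = 0%N -> j <= c.
Proof.
case: (kk_cases c j) => [E e|[_ h] _]; last exact: ltW.
by rewrite E e /lv addr0.
Qed.

Lemma kk_split j : kk c j = 0%N \/ exists m, kk c j = m.+1.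
Proof. by case: (kk c j) => [|m]; [left | right; exists m]. Qed.

Lemma surj_gen a b m j j' (y : X j) : a = m.+1 -> b = m -> j = lv c m.+1 -> j' = lv c m ->
  cdif X j j' y = 0 -> exists (x : M a) (z : X (j + 1)),
    D B M dM a b x = 0 /\ y = castX R X (lv c a) j (qM a x) + cdif X (j + 1) j z.
Proof.
move=> ea eb ej ej' hy; subst a b j j'.
case: (Hsurj m y hy) => v [h1 h2].
exists v, 0; rewrite D_succ h1 cdif0 addr0 /castX castT_id; split => //.
Qed.

Lemma inj_gen a b a' m j j2 (x : M a) (z : X j2) : a = m.+1 -> b = m -> a' = m.+2 ->
  j = lv c m.+1 -> j2 = lv c m.+2 -> D B M dM a b x = 0 ->
  castX R X (lv c a) j (qM a x) = cdif X j2 j z -> exists w : M a', x = D B M dM a' a w.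
Proof.
move=> ea eb ea' ej ej2 hx hz; subst a b a' j j2.
rewrite D_succ in hx; rewrite /castX castT_id in hz.
case: (Hinj m x z hx hz) => w hw; exists w; by rewrite D_succ.
Qed.

Lemma tower_qiso : quasi_iso (C := cpx B M dM dM_sl dMdM M0 c) (D := X) qI.
Proof.
move=> j; split.
- move=> y hy.
  case: (kk_split j) => [E|[m E]].
    case: (Hz j (kk0_le j E) y hy) => z hz.
    exists 0, z; rewrite /= D0 // qI0 add0r; split => //.
  have [E1 E2] := kk_pred c j m E.
  exact: (surj_gen (kk c j) (kk c (j - 1)) m j (j - 1) y E E1 (kk_succ c j m E) E2 hy).
- move=> x hx [z hz].
  case: (kk_split j) => [E|[m E]].
    exists 0; rewrite /= D0 //; apply: Mz => //.
  have [E1 E2] := kk_pred c j m E.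
  have ej := kk_succ c j m E.
  have [E3 E4] := kk_next c j m.+1 ej.
  exact: (inj_gen (kk c j) (kk c (j - 1)) (kk c (j + 1)) m j (j + 1) x z E E1 E3 ej E4 hx hz).
Qed.

Lemma tower_bb : bounded_below (cpx B M dM dM_sl dMdM M0 c).
Proof.
exists c => i hi p; apply: Mz => //.
case: (kk_cases c i) => [E|[]//].
by move: hi; rewrite {1}E ltNge lv_ge.
Qed.
End TowerX.

From HB Require Import structures.
From mathcomp Require Import all_boot all_order all_algebra.
From Stdlib Require Import ClassicalEpsilon FunctionalExtensionality ProofIrrelevance.
Set Implicit Arguments. Unset Strict Implicit. Unset Printing Implicit Defensive.
Import Order.TTheory GRing.Theory Num.Theory.
Local Open Scope ring_scope.
Unset Implicit Arguments.

Section Beta.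
Variables (Q R : comNzRingType) (pi : {rmorphism Q -> R}) (x : Q) (X : complex R) (n0 : int).
Hypothesis pi_surj : forall r : R, exists q : Q, pi q = r.
Hypothesis hker : forall q : Q, pi q = 0 <-> exists a : Q, q = x * a.
Local Notation F := (Fm Q R pi x X n0).
Local Notation dFF := (dF Q R pi x X n0).
Local Notation DF := (D R F dFF).
Local Notation btF := (bt Q R pi x X n0).
Local Notation cF := (castT R nat F).

Lemma Fm0' (p : F 0) : p = 0. Proof. exact: Fm0. Qed.

Lemma bt_sl m : sl (idfun : {rmorphism R -> R}) (btF m).
Proof. by case: m => [|[|m]] a u v //=; rewrite scaler0 addr0. Qed.

Lemma bt_D a b p : btF b (DF a b p) = DF a.-2 b.-2 (btF a p).
Proof.
case: a p => [|a1] p.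
  by rewrite /= (sl0 (bt_sl b)).
case: (eqVneq a1 b) => [e|/eqP ne].
  subst b; rewrite /= /cM castT_id.
  case: a1 p => [|[|b2]] p //=.
  by rewrite /cM castT_id.
rewrite /= /cM castT_ne // (sl0 (bt_sl b)).
case: a1 p ne => [|a2] p ne /=; first by [].
case: (eqVneq a2 (b.-2).+1) => [e|/eqP ne2]; last by rewrite D_ne.
case: b ne e => [|[|b3]] ne e; first 2 last.
  by exfalso; apply: ne; rewrite e.
all: by symmetry; apply: Fm0'.
Qed.

Lemma split_gen m m' (e : m' = m.-2) :
  let beta := fun p : F m => cF m.-2 m' (btF m p) in
  [/\ injective (alF Q R pi x X n0 m),
     (forall y, beta y = 0 <-> exists t, y = alF Q R pi x X n0 m t) &
     exists s : F m' -> F m, lin s /\ forall z, beta (s z) = z].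
Proof.
subst m' => beta; rewrite /beta; clear beta.
split.
- by move=> t t' /(congr1 fst).
- move=> y; rewrite castT_id; split.
  + move: y; case: m => [|[|m]] y /= h.
    * by exists y.1; rewrite [LHS]pairE (T0eq Q R pi x X n0 y.2 0).
    * by exists y.1; rewrite [LHS]pairE (T0eq Q R pi x X n0 y.2 0).
    * by exists y.1; rewrite [LHS]pairE h.
  + case=> t ->; clear y; by move: t; case: m => [|[|m]] t.
- exists (sec Q R pi x X n0 m); split.
    case: m => [|[|m]] a u v //=; rewrite ?scaler0 ?addr0 //.
    by rewrite [RHS]pairE pD1 pD2 pZ1 pZ2 /= scaler0 addr0.
  move=> z; rewrite castT_id.
  move: z; case: m => [|[|m]] z //=; by symmetry; apply: Fm0'.
Qed.
End Beta.

Lemma proj_prod (A : comNzRingType) (U V : lmodType A) :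
  projective U -> projective V -> projective (U * V)%type.
Proof.
move=> pU pV M N g f lg lf sg.
have l1 : lin (fun u : U => f (u, 0)).
  move=> a u v; rewrite -(lf a (u, 0) (v, 0)); congr f.
  by rewrite [RHS]pairE pD1 pD2 pZ1 pZ2 /= scaler0 addr0.
have l2 : lin (fun v : V => f (0, v)).
  move=> a u v; rewrite -(lf a (0, u) (0, v)); congr f.
  by rewrite [RHS]pairE pD1 pD2 pZ1 pZ2 /= scaler0 addr0.
case: (pU M N g _ lg l1 sg) => h1 [lh1 e1].
case: (pV M N g _ lg l2 sg) => h2 [lh2 e2].
exists (fun p => h1 p.1 + h2 p.2); split.
  move=> a u v /=; rewrite lh1 lh2 scalerDr addrACA //.
move=> [u v]; have sg' := lin_sl lg.
rewrite (slD sg') e1 e2 /=.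
have E : ((u, v) : (U * V)%type) = (u, 0) + (0, v).
  by rewrite [RHS]pairE pD1 pD2 /= addr0 add0r.
by rewrite E (slD (lin_sl lf)).
Qed.

From HB Require Import structures.
From mathcomp Require Import all_boot all_order all_algebra.
From Stdlib Require Import ClassicalEpsilon FunctionalExtensionality ProofIrrelevance.
Set Implicit Arguments. Unset Strict Implicit. Unset Printing Implicit Defensive.
Import Order.TTheory GRing.Theory Num.Theory.
Local Open Scope ring_scope.
Unset Implicit Arguments.

Lemma G_proj (Q R : comNzRingType) (pi : {rmorphism Q -> R}) (x : Q) (X : complex R) (n0 : int) m :
  projective (G Q R pi x X n0 m).
Proof.
elim/nat2_ind: m => [||m IH]; try exact: Fr_projective.
exact (proj_prod _ _ _ (@Fr_projective _ _) IH).
Qed.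

Lemma Fm_proj (Q R : comNzRingType) (pi : {rmorphism Q -> R}) (x : Q) (X : complex R) (n0 : int) m :
  projective (Fm Q R pi x X n0 m).
Proof. exact (proj_prod _ _ _ (@Fr_projective _ _) (G_proj Q R pi x X n0 m)). Qed.

Section Main.
Variables (Q R : comNzRingType) (pi : {rmorphism Q -> R}) (x : Q) (X : complex R) (n0 : int).
Hypothesis pix : pi x = 0.
Hypothesis psurj : forall r : R, exists q : Q, pi q = r.
Hypothesis xreg : forall q : Q, x * q = 0 -> q = 0.
Hypothesis hker : forall q : Q, pi q = 0 <-> exists a : Q, q = x * a.
Hypothesis Hz : forall j, j <= n0 - 1 -> homology_zero X j.

Definition WM m : lmodType Q := Fr Q (L2 Q R X n0 m (st Q R pi x X n0 m) + L1 Q R X n0 m (st Q R pi x X n0 m)).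
Definition TM m : lmodType R := Fr R (L2 Q R X n0 m (st Q R pi x X n0 m) + L1 Q R X n0 m (st Q R pi x X n0 m)).
Definition FM m : lmodType R := Fm Q R pi x X n0 m.

Let dW : forall m, WM m.+1 -> WM m := d Q R pi x X n0.
Let dWsl : forall m, sl (idfun : {rmorphism Q -> Q}) (dW m) := d_sl Q R pi x X n0.
Let dWdW : forall m (v : WM m.+2), dW m (dW m.+1 v) = 0 := fun m v => dd_d Q R pi x X n0 m.+1 v.
Let W0' : forall v : WM 0, v = 0 := W0 Q R pi x X n0.
Let qWm : forall m, WM m -> X (lv (n0 - 1) m) := q Q R pi x X n0.
Let qWsl : forall m, sl pi (qWm m) := qq_sl Q R pi x X n0.
Let qWch : forall m v, qWm m (dW m v) = cdif X (lv (n0 - 1) m.+1) (lv (n0 - 1) m) (qWm m.+1 v) :=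
  q_chain Q R pi x X n0 pix.

Let dTT : forall m, TM m.+1 -> TM m := dT Q R pi x X n0.
Let dTsl : forall m, sl (idfun : {rmorphism R -> R}) (dTT m) := dT_sl Q R pi x X n0.
Let dTdT' : forall m (v : TM m.+2), dTT m (dTT m.+1 v) = 0 := dTdT Q R pi x X n0 psurj.
Let T0' : forall v : TM 0, v = 0 := T0 Q R pi x X n0.

Let dFF : forall m, FM m.+1 -> FM m := dF Q R pi x X n0.
Let dFsl : forall m, sl (idfun : {rmorphism R -> R}) (dFF m) := dF_sl Q R pi x X n0.
Let dFdF' : forall m (v : FM m.+2), dFF m (dFF m.+1 v) = 0 := dFdF Q R pi x X n0 psurj hker.
Let F0' : forall v : FM 0, v = 0 := Fm0 Q R pi x X n0.
Let qFm : forall m, FM m -> X (lv (n0 - 1) m) := qF Q R pi x X n0.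
Let qFsl : forall m, sl (idfun : {rmorphism R -> R}) (qFm m) := qF_sl Q R pi x X n0.
Let qFch : forall m v, qFm m (dFF m v) = cdif X (lv (n0 - 1) m.+1) (lv (n0 - 1) m) (qFm m.+1 v) :=
  qF_chain Q R pi x X n0 pix psurj.

Definition WC := cpx Q WM dW dWsl dWdW W0' (n0 - 1).
Definition TC := cpx R TM dTT dTsl dTdT' T0' (n0 - 1).
Definition FC := cpx R FM dFF dFsl dFdF' F0' (n0 - 1).

Lemma alF_sl m : sl (idfun : {rmorphism R -> R}) (alF Q R pi x X n0 m).
Proof. by move=> a u v; rewrite /alF [RHS]pairE pD1 pD2 pZ1 pZ2 /= scaler0 addr0. Qed.

Lemma sign2 : ((-1 : R) ^+ `|(2 : int)|%N) = 1.
Proof. by rewrite /= expr2 mulrNN mulr1. Qed.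

Lemma beta_gen a b a' b' (p : FM a) : a' = a.-2 -> b' = b.-2 ->
  castT R nat FM b.-2 b' (bt Q R pi x X n0 b (D R FM dFF a b p)) =
  D R FM dFF a' b' (castT R nat FM a.-2 a' (bt Q R pi x X n0 a p)).
Proof. by move=> ea eb; subst a' b'; rewrite !castT_id; exact: bt_D. Qed.

Lemma main_exists :
  exists (W : complex Q) (qW : forall i, W i -> X i)
         (F : complex R) (qF : forall i, F i -> X i)
         (T : complex R) (eta : forall i, W i -> T i)
         (alpha : forall i, T i -> F i) (beta : forall i, F i -> shift 2 F i),
    [/\ proj_complex W /\ schain_map pi qW /\ quasi_iso qW,
        proj_complex F /\ chain_map qF /\ quasi_iso qF,
        (forall i, base_change pi (eta i)) /\
        (forall i j w, eta j (cdif W i j w) = cdif T i j (eta i w)),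
        chain_map alpha /\ chain_map beta
      & degreewise_split_exact alpha beta].
Proof.
pose c := n0 - 1.
pose qW := qI Q R X c WM qWm.
pose qFF := qI R R X c FM qFm.
pose eta := fun i => et Q R pi x X n0 (kk c i).
pose alpha := fun i => alF Q R pi x X n0 (kk c i).
pose beta := fun i (p : FC i) =>
  castT R nat FM (kk c i).-2 (kk c (i - 2)) (bt Q R pi x X n0 (kk c i) p).
exists WC, qW, FC, qFF, TC, eta, alpha, beta.
have Wsurj : forall m (y : X (lv c m.+1)), cdif X (lv c m.+1) (lv c m) y = 0 ->
    exists v : WM m.+1, dW m v = 0 /\ qWm m.+1 v = y.
  by move=> m y h; exact: (W_surj Q R pi x X n0 m y h).
have Winj : forall m (v : WM m.+1) (z : X (lv c m.+2)), dW m v = 0 ->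
    qWm m.+1 v = cdif X (lv c m.+2) (lv c m.+1) z -> exists a : WM m.+2, dW m.+1 a = v.
  by move=> m v z h1 h2; exact: (W_inj Q R pi x X n0 m.+1 v z h1 h2).
have Fsurj : forall m (y : X (lv c m.+1)), cdif X (lv c m.+1) (lv c m) y = 0 ->
    exists v : FM m.+1, dFF m v = 0 /\ qFm m.+1 v = y.
  by move=> m y h; exact: (F_surj Q R pi x X n0 m y h).
have Finj : forall m (v : FM m.+1) (z : X (lv c m.+2)), dFF m v = 0 ->
    qFm m.+1 v = cdif X (lv c m.+2) (lv c m.+1) z -> exists a : FM m.+2, dFF m.+1 a = v.
  by move=> m v z h1 h2; exact: (F_inj Q R pi x X n0 psurj xreg hker m v z h1 h2).
split.
- split; first by split; [exact: (tower_bb Q c WM dW dWsl dWdW W0') | move=> i; exact: Fr_projective].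
  split; last exact: (tower_qiso Q R pi X c WM dW dWsl dWdW W0' qWm qWsl Wsurj Winj Hz).
  split; first by move=> i; exact: (qI_sl Q R pi X c WM qWm qWsl i).
  by move=> i j w; exact: (qI_chain Q R pi X c WM dW dWsl W0' qWm qWsl qWch i j w).
- split; first by split; [exact: (tower_bb R c FM dFF dFsl dFdF' F0') | move=> i; exact: Fm_proj].
  split; last exact: (tower_qiso R R idfun X c FM dFF dFsl dFdF' F0' qFm qFsl Fsurj Finj Hz).
  split; first by move=> i; exact: (qI_sl R R idfun X c FM qFm qFsl i).
  by move=> i j w; exact: (qI_chain R R idfun X c FM dFF dFsl F0' qFm qFsl qFch i j w).
- split; first by move=> i; exact: (eta_base_change pi _).
  move=> i j w.
  exact: (tower_map Q R pi WM dW TM dTT (et Q R pi x X n0) (et_sl Q R pi x X n0)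
            (fun m v => esym (dT_et Q R pi x X n0 m v)) (kk c i) (kk c j) w).
- split.
    split; first by move=> i; exact: (alF_sl (kk c i)).
    move=> i j t.
    exact: (tower_map R R idfun TM dTT FM dFF (alF Q R pi x X n0) alF_sl
              (fun m t => esym (alF_chain Q R pi x X n0 m t)) (kk c i) (kk c j) t).
  split.
    move=> i a u v; rewrite /beta (bt_sl Q R pi x X n0 (kk c i)).
    exact: (castT_sl R nat FM).
  move=> i j p.
  rewrite /= /beta sign2 scale1r.
  apply: beta_gen; exact: kk_m2.
- move=> i; exact: (split_gen Q R pi x X n0 (kk c i) (kk c (i - 2)) (kk_m2 c i)).
Qed.
End Main.

Theorem mainTheorem3 (Q R : comNzRingType) (x : Q) (pi : {rmorphism Q -> R})
  (X : complex R) :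
  noetherian Q -> local_ring Q -> regular_element x -> is_quotient_by x pi ->
  (exists N : int, forall i : int, N < `|i| -> homology_zero X i) ->
  exists (W : complex Q) (qW : forall i, W i -> X i)
         (F : complex R) (qF : forall i, F i -> X i)
         (T : complex R) (eta : forall i, W i -> T i)
         (alpha : forall i, T i -> F i) (beta : forall i, F i -> shift 2 F i),
    [/\ proj_complex W /\ schain_map pi qW /\ quasi_iso qW,
        proj_complex F /\ chain_map qF /\ quasi_iso qF,
        (* T = R (x)_Q W with the induced differential *)
        (forall i, base_change pi (eta i)) /\
        (forall i j w, eta j (cdif W i j w) = cdif T i j (eta i w)),
        chain_map alpha /\ chain_map beta
      & degreewise_split_exact alpha beta].
Proof.
move=> _ _ [xreg _] [psurj hker] [N hN].
have pix : pi x = 0 by apply/hker; exists 1; rewrite mulr1.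
apply: (main_exists Q R pi x X (- `|N|) pix psurj xreg hker).
move=> j h; apply: hN.
have h1 : j < - `|N| by rewrite -lezD1 -lerBrDr.
rewrite ltr_normr; apply/orP; right.
apply: (le_lt_trans (ler_norm N)); by rewrite -ltrNr.
Qed.
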